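(* Let $K$ be a number field, let $X\subseteq M_d(K)$ be a closed set in the linear Zariski topology, and let $D,D'\subseteq X$ be arbitrary subsets. If $DD'\subseteq X$, then also $\overline{D}\,\overline{D'}\subseteq X$.
   Context: The linear Zariski topology on $M_d(K)$ has as closed sets exactly the finite unions of vector subspaces; $\overline{D}$ is the closure of $D$ in this topology, and for sets $Y,Z$ of matrices, $YZ=\{yz: y\in Y,z\in Z\}$. *)

(* Defs.v *)
From HB Require Import structures.
From mathcomp Require Import all_boot all_order all_algebra all_field.
Set Implicit Arguments. Unset Strict Implicit. Unset Printing Implicit Defensive.
Import GRing.Theory.
Local Open Scope ring_scope.

(* A number field is modelled as a finite-dimensional field extension of Q:
   K : fieldExtType rat.  Subsets of M_d(K) are predicates 'M[K]_d -> Prop. *)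

Definition lz_closed (K : fieldType) (d : nat) (X : 'M[K]_d -> Prop) : Prop :=
  exists Us : seq {vspace 'M[K]_(d, d)},
    forall A : 'M[K]_d, X A <-> has (fun U : {vspace 'M[K]_(d, d)} => A \in U) Us.

Definition lz_closure (K : fieldType) (d : nat) (D : 'M[K]_d -> Prop)
  : 'M[K]_d -> Prop :=
  fun A => forall Y : 'M[K]_d -> Prop,
    lz_closed Y -> (forall B, D B -> Y B) -> Y A.

Definition prod_sub (K : fieldType) (d : nat) (Y Z X : 'M[K]_d -> Prop) : Prop :=
  forall y z, Y y -> Z z -> X (y *m z).

(* Main.v *)
Require Import Defs.
From HB Require Import structures.
From mathcomp Require Import all_boot all_order all_algebra all_field.
Import GRing.Theory.
Local Open Scope ring_scope.

Lemma preim_closed (K : fieldType) (d : nat) (f : 'End('M[K]_(d, d)))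
  (X : 'M[K]_d -> Prop) :
  lz_closed X -> lz_closed (fun A => X (f A)).
Proof.
move=> [Us HU]; exists (map (fun U => (f @^-1: U)%VS) Us) => A.
rewrite has_map; split; [move/HU|move=> H; apply/HU; move: H]; move=> /hasP [U UU HA]; apply/hasP; exists U => //=.
  by rewrite -memv_preim.
by move: HA; rewrite /= -memv_preim.
Qed.

Theorem mainTheorem8 (K : fieldExtType rat) (d : nat)
  (X D D' : 'M[K]_d -> Prop) :
  lz_closed X ->
  (forall A, D A -> X A) ->
  (forall A, D' A -> X A) ->
  prod_sub D D' X ->
  prod_sub (lz_closure D) (lz_closure D') X.
Proof.
move=> cX _ _ HDD y z Hy Hz.
have Hz' : forall y0, D y0 -> X (y0 *m z).
  move=> y0 Dy0.
  have := Hz (fun A => X (linfun (mulmx y0) A)).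
  rewrite lfunE /=; apply; first exact: preim_closed.
  by move=> B DB; rewrite lfunE /=; apply: HDD.
have := Hy (fun A => X (linfun (mulmxr z) A)).
rewrite lfunE /=; apply; first exact: preim_closed.
by move=> B DB; rewrite lfunE /=; apply: Hz'.
Qed.
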